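(* Let $\Gamma$ be a rationally metrised graph containing a connected subgraph $C$ and two distinct vertices $w_0,w_1$ of $C$ such that for every vertex $w$ of $C$ other than $w_0,w_1$, every edge or half-edge of $\Gamma$ incident to $w$ lies in $C$. Let $\Gamma'$ be obtained from $\Gamma$ by replacing $C$ by a single edge $e_C$ from $w_0$ to $w_1$ (and its inverse) of length $\ell(e_C)=\langle w_1-w_0,w_1-w_0\rangle_C$, and let $\rho$ be the map on rational vertices which is the identity outside $C$ and sends a rational vertex $v$ of $C$ to the point at distance $\langle v-w_0,w_1-w_0\rangle_C$ along $e_C$. After subdividing $\Gamma$ and $\Gamma'$ so that $\rho$ is induced by a graph morphism (each edge of $\Gamma$ mapping either to a vertex or onto an edge of $\Gamma'$), for every edge $e'$ of $\Gamma'$ we have \[\frac1{\ell(e')}=\sum_{\rho(e)=e'}\frac1{\ell(e)}.\]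
   Context: Rationally metrised graph: finite sets of vertices, oriented edges, half-edges, source map, fixed-point-free involution $e\mapsto e^{-1}$ on edges, connected, lengths $\ell(e)=\ell(e^{-1})\in\mathbb Q_{>0}$. Rational vertices are points at rational distance along edges/half-edges. $\langle\cdot,\cdot\rangle_C$ is the height pairing on divisors of total mass $0$ on $C$: $\langle\mathbf u,\mathbf v\rangle_C={}^t\mathbf uL_C^{-1}\mathbf v$ where $L_C$ is the Laplacian matrix of $C$ ($L_{uu}=\sum_{s(e)=u\ne t(e)}1/\ell(e)$, $L_{uv}=-\sum_{s(e)=u,t(e)=v}1/\ell(e)$), extended to rational vertices by subdivision; one has $0\le\langle v-w_0,w_1-w_0\rangle_C\le\ell(e_C)$, so $\rho$ is well defined. *)

(* Defs.v *)
From HB Require Import structures.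
From mathcomp Require Import all_boot all_order all_algebra.
From Stdlib Require Import ClassicalEpsilon.
Set Implicit Arguments. Unset Strict Implicit. Unset Printing Implicit Defensive.
Import Order.TTheory GRing.Theory Num.Theory.
Local Open Scope ring_scope.

(** Divisors on a vertex type: [delta a] is the point mass at [a]. *)
Definition delta {T : eqType} (a : T) : T -> rat := fun x => if x == a then 1 else 0.
Definition ddiff {T : eqType} (a b : T) : T -> rat := fun x => delta a x - delta b x.

(** A graph given by its list of ORIENTED edges (source, target, length)
    (every edge appears together with its inverse).  [lapl es f] is L f,
    where L_uu = sum_{s(e)=u<>t(e)} 1/l(e), L_uv = - sum_{s(e)=u,t(e)=v} 1/l(e). *)
Definition lapl {T : finType} (es : seq (T * T * rat)) (f : T -> rat) (u : T) : rat :=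
  \sum_(x <- es | (x.1.1 == u) && (x.1.2 != u)) (f u - f x.1.2) / x.2.

(** Height pairing <D1, D2> = tD1 L^{-1} D2 (D1, D2 of mass 0):
    the value sum_u D1(u) f(u) for f with L f = D2. *)
Definition height_pairing {T : finType} (es : seq (T * T * rat)) (D1 D2 : T -> rat) : rat :=
  epsilon (inhabits 0) (fun r => exists f : T -> rat,
     (forall u, lapl es f u = D2 u) /\ \sum_(u : T) D1 u * f u = r).

Definition pieces (cuts : seq rat) (L : rat) : seq (rat * rat) :=
  let p := sort (fun x y : rat => x <= y) (undup [:: 0, L & cuts]) in zip p (behead p).

Definition plen {T : Type} (p : T * rat * rat) : rat := p.2 - p.1.2.

Section Graph.
(** Graph: vertices V, oriented edges E, half-edges H, source map [src],
    involution [inv] (e |-> e^{-1}), half-edge source [hsrc], lengths [len]. *)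
Variables (V E H : finType) (src : E -> V) (inv : E -> E) (hsrc : H -> V)
  (len : E -> rat).

Definition tgt (e : E) : V := src (inv e).

Definition is_rmgraph : Prop :=
  [/\ involutive inv, forall e, inv e != e,
      forall e, len (inv e) = len e, forall e, 0 < len e
    & forall u v : V, connect [rel x y | [exists e, (src e == x) && (tgt e == y)]] u v].

Definition is_subgraph (VC : {set V}) (EC : {set E}) (HC : {set H}) : Prop :=
  [/\ forall e, e \in EC -> inv e \in EC,
      forall e, e \in EC -> src e \in VC
    & forall h, h \in HC -> hsrc h \in VC].

Definition sub_connected (VC : {set V}) (EC : {set E}) : Prop :=
  forall u v, u \in VC -> v \in VC ->
    connect [rel x y | [exists e, [&& e \in EC, src e == x & tgt e == y]]] u v.

Definition Cedges (EC : {set E}) : seq (V * V * rat) :=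
  [seq (src e, tgt e, len e) | e <- enum EC].

(** oriented edge list of C subdivided at the point at distance t along e0
    (new vertex = None) *)
Definition Cedges_sub (EC : {set E}) (e0 : E) (t : rat) : seq (option V * option V * rat) :=
  flatten [seq (if e == e0 then
                  [:: (Some (src e), None, t); (None, Some (tgt e), len e - t)]
                else if e == inv e0 then
                  [:: (Some (src e), None, len e - t); (None, Some (tgt e), t)]
                else [:: (Some (src e), Some (tgt e), len e)]) | e <- enum EC].

Definition eC_len (EC : {set E}) (w0 w1 : V) : rat :=
  height_pairing (Cedges EC) (ddiff w1 w0) (ddiff w1 w0).

(** rho of the rational vertex of C at distance t (0 <= t <= len e) along e in EC:
    the distance <v - w0, w1 - w0>_C along e_C (computed after subdivision). *)
Definition rho_pt (EC : {set E}) (w0 w1 : V) (e : E) (t : rat) : rat :=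
  if t == 0 then height_pairing (Cedges EC) (ddiff (src e) w0) (ddiff w1 w0)
  else if t == len e then height_pairing (Cedges EC) (ddiff (tgt e) w0) (ddiff w1 w0)
  else height_pairing (Cedges_sub EC e t) (ddiff None (Some w0)) (ddiff (Some w1) (Some w0)).

(** Edges of Gamma': inl e for e not in C, inr true = e_C, inr false = e_C^{-1}. *)
Definition edges' (EC : {set E}) : seq (E + bool) :=
  [seq inl e | e <- enum (~: EC)] ++ [:: inr true; inr false].

Definition len' (EC : {set E}) (w0 w1 : V) (x : E + bool) : rat :=
  match x with inl e => len e | inr _ => eC_len EC w0 w1 end.

(** A subdivision of Gamma: rational cut points strictly inside each edge,
    compatible with inversion. *)
Definition valid_cuts (cut : E -> seq rat) : Prop :=
  forall e, (forall t, t \in cut e -> 0 < t < len e) /\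
            cut (inv e) =i [seq len e - t | t <- cut e].

Definition valid_cuts' (EC : {set E}) (w0 w1 : V) (cut' : E + bool -> seq rat) : Prop :=
  [/\ forall e, e \notin EC ->
        (forall t, t \in cut' (inl e) -> 0 < t < len e) /\
        cut' (inl (inv e)) =i [seq len e - t | t <- cut' (inl e)],
      forall b t, t \in cut' (inr b) -> 0 < t < eC_len EC w0 w1
    & cut' (inr false) =i [seq eC_len EC w0 w1 - t | t <- cut' (inr true)]].

(** Oriented edges of the subdivided Gamma: (e, a, b) = part of e from a to b. *)
Definition sub_edges (cut : E -> seq rat) : seq (E * rat * rat) :=
  flatten [seq [seq (e, ab.1, ab.2) | ab <- pieces (cut e) (len e)] | e <- enum E].

Definition sub_edges' (EC : {set E}) (w0 w1 : V) (cut' : E + bool -> seq rat)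
  : seq ((E + bool) * rat * rat) :=
  flatten [seq [seq (x, ab.1, ab.2) | ab <- pieces (cut' x) (len' EC w0 w1 x)] | x <- edges' EC].

(** The image under rho of a subdivided edge: None if it is sent to a vertex,
    Some e' if it is sent onto the edge e' of subdivided Gamma'. *)
Definition rho_edge (EC : {set E}) (w0 w1 : V) (p : E * rat * rat)
  : option ((E + bool) * rat * rat) :=
  let: (e, a, b) := p in
  if e \in EC then
    let ra := rho_pt EC w0 w1 e a in
    let rb := rho_pt EC w0 w1 e b in
    if ra == rb then None
    else if ra < rb then Some (inr true, ra, rb)
    else Some (inr false, eC_len EC w0 w1 - ra, eC_len EC w0 w1 - rb)
  else Some (inl e, a, b).

Definition rho_is_morphism (EC : {set E}) (w0 w1 : V) (cut : E -> seq rat)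
  (cut' : E + bool -> seq rat) : Prop :=
  forall p, p \in sub_edges cut ->
    match rho_edge EC w0 w1 p with
    | Some q => q \in sub_edges' EC w0 w1 cut'
    | None => rho_pt EC w0 w1 p.1.1 p.1.2 \in
                [:: 0, eC_len EC w0 w1 & cut' (inr true)]
    end.

End Graph.

(* Main.v *)
Require Import Defs.
From mathcomp Require Import all_boot all_order all_algebra.
From mathcomp Require Import ring lra.
From Stdlib Require Import ClassicalEpsilon.
Set Implicit Arguments. Unset Strict Implicit. Unset Printing Implicit Defensive.
Import Order.TTheory GRing.Theory Num.Theory.
Local Open Scope ring_scope.

Definition revx {T : Type} (x : T * T * rat) : T * T * rat := (x.1.2, x.1.1, x.2).
Definition symes {T : Type} (es : seq (T * T * rat)) :=
  forall F : T * T * rat -> rat, \sum_(x <- es) F x = \sum_(x <- es) F (revx x).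

Lemma lapl_sum (T : finType) (es : seq (T * T * rat)) (F G : T -> rat) :
  \sum_u G u * lapl es F u = \sum_(x <- es) G x.1.1 * ((F x.1.1 - F x.1.2) / x.2).
Proof.
rewrite /lapl.
under eq_bigr do rewrite big_distrr /= big_mkcond /=.
rewrite exchange_big /=; apply: eq_bigr => x _.
rewrite (bigD1 x.1.1) //= eqxx /= big1 ?addr0; last first.
  by move=> u /negbTE Hu; rewrite eq_sym Hu.
case: eqP => [->|//]; by rewrite subrr mul0r mulr0.
Qed.

Lemma KI (T : finType) (es : seq (T * T * rat)) (F G : T -> rat) : symes es ->
  \sum_(x <- es | F x.1.1 < F x.1.2) (F x.1.2 - F x.1.1) * (G x.1.2 - G x.1.1) / x.2
  = \sum_u G u * lapl es F u.
Proof.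
move=> Hs; rewrite lapl_sum.
set w := fun x : T * T * rat => (F x.1.2 - F x.1.1) * (G x.1.2 - G x.1.1) / x.2.
have H1 : \sum_(x <- es) G x.1.1 * ((F x.1.1 - F x.1.2) / x.2)
        = \sum_(x <- es) G x.1.2 * ((F x.1.2 - F x.1.1) / x.2).
  by rewrite Hs.
have H2 : \sum_(x <- es) w x = (\sum_(x <- es) G x.1.1 * ((F x.1.1 - F x.1.2) / x.2)) *+ 2.
  rewrite mulr2n {2}H1 -big_split /=; apply: eq_bigr => x _; rewrite /w; ring.
have H4 : \sum_(x <- es) (if F x.1.2 < F x.1.1 then w x else 0)
          = \sum_(x <- es) (if F x.1.1 < F x.1.2 then w x else 0).
  rewrite Hs; apply: eq_bigr => x _; rewrite /w /revx /=.
  case: ifP => // _; ring.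
have H3 : \sum_(x <- es) w x = (\sum_(x <- es | F x.1.1 < F x.1.2) w x) *+ 2.
  rewrite mulr2n [X in _ = _ + X]big_mkcond -H4 [X in _ = X + _]big_mkcond -big_split /=.
  apply: eq_bigr => x _; rewrite /w /=.
  case: (ltgtP (F x.1.1) (F x.1.2)) => H.
  - by rewrite addr0.
  - by rewrite add0r.
  - by rewrite H subrr !mul0r addr0.
have : (\sum_(x <- es | F x.1.1 < F x.1.2) w x) *+ 2 = 
       (\sum_(x <- es) G x.1.1 * ((F x.1.1 - F x.1.2) / x.2)) *+ 2 by rewrite -H3 H2.
move/eqP; rewrite -mulr_natr -[X in _ == X]mulr_natr (inj_eq (mulIf _)) //.
by move/eqP.
Qed.

Lemma sum_pos_zero (I : eqType) (r : seq I) (P : pred I) (F : I -> rat) x :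
  (forall y, y \in r -> P y -> 0 <= F y) ->
  \sum_(y <- r | P y) F y = 0 -> x \in r -> P x -> F x = 0.
Proof.
move=> Hp Hs xr Px.
have H0 : 0 <= \sum_(y <- rem x r | P y) F y.
  rewrite big_seq_cond; apply: sumr_ge0 => y /andP[yr Py].
  apply: Hp Py; exact: (mem_rem yr).
move: Hs; rewrite (big_rem _ xr) Px => Hs.
have Fx := Hp x xr Px.
apply/eqP; rewrite eq_le Fx andbT; rewrite -Hs lerDl //.
Qed.

Definition pos_len {T : eqType} (es : seq (T * T * rat)) := forall x, x \in es -> 0 < x.2.

Lemma energy0 (T : finType) (es : seq (T * T * rat)) (h : T -> rat) :
  symes es -> pos_len es -> \sum_u h u * lapl es h u = 0 ->
  forall x, x \in es -> h x.1.1 = h x.1.2.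
Proof.
move=> Hs Hp H0.
have K := KI h h Hs; rewrite H0 in K.
have K2 : \sum_(x <- es | h x.1.2 < h x.1.1) (h x.1.1 - h x.1.2) * (h x.1.1 - h x.1.2) / x.2 = 0.
  rewrite -[RHS]K big_mkcond Hs [RHS]big_mkcond; apply: eq_bigr => x _ //.
have pos : forall y, y \in es -> 0 <= (h y.1.2 - h y.1.1) * (h y.1.2 - h y.1.1) / y.2.
  move=> y /Hp ly; apply: divr_ge0; last exact: ltW.
  by rewrite -expr2 sqr_ge0.
move=> x xe; case: (ltgtP (h x.1.1) (h x.1.2)) => // H.
- have := sum_pos_zero (fun y yr _ => pos y yr) K xe H.
  move/eqP; rewrite mulf_eq0 invr_eq0 (gt_eqF (Hp _ xe)) orbF mulf_eq0 orbb subr_eq0.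
  by move/eqP=> E; move: H; rewrite E ltxx.
- have pos' : forall y, y \in es -> 0 <= (h y.1.1 - h y.1.2) * (h y.1.1 - h y.1.2) / y.2.
    move=> y /Hp ly; apply: divr_ge0; last exact: ltW.
    by rewrite -expr2 sqr_ge0.
  have := sum_pos_zero (fun y yr _ => pos' y yr) K2 xe H.
  move/eqP; rewrite mulf_eq0 invr_eq0 (gt_eqF (Hp _ xe)) orbF mulf_eq0 orbb subr_eq0.
  by move/eqP=> E; move: H; rewrite E ltxx.
Qed.

Lemma lapl_sub (T : finType) (es : seq (T * T * rat)) (f g : T -> rat) u :
  lapl es (fun v => f v - g v) u = lapl es f u - lapl es g u.
Proof.
rewrite /lapl -sumrB; apply: eq_bigr => x _; rewrite -mulrBl; congr (_ * _); ring.
Qed.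

Lemma lapl_shift (T : finType) (es : seq (T * T * rat)) (f : T -> rat) c u :
  lapl es (fun v => f v - c) u = lapl es f u.
Proof.
rewrite /lapl; apply: eq_bigr => x _; congr (_ * _); ring.
Qed.

Lemma hp_eval (T : finType) (es : seq (T * T * rat)) (D1 D2 f : T -> rat) :
  symes es -> pos_len es -> (forall u, lapl es f u = D2 u) ->
  (forall h : T -> rat, (forall x, x \in es -> h x.1.1 = h x.1.2) -> \sum_u D1 u * h u = 0) ->
  height_pairing es D1 D2 = \sum_u D1 u * f u.
Proof.
move=> Hs Hp Hf Horth; rewrite /height_pairing.
have [g [Hg <-]] : exists g : T -> rat,
     (forall u, lapl es g u = D2 u) /\ \sum_(u : T) D1 u * g u = 
     epsilon (inhabits 0) (fun r => exists f : T -> rat,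
     (forall u, lapl es f u = D2 u) /\ \sum_(u : T) D1 u * f u = r).
  by apply: (epsilon_spec (inhabits 0) (fun r => exists f : T -> rat,
     (forall u, lapl es f u = D2 u) /\ \sum_(u : T) D1 u * f u = r)); exists (\sum_u D1 u * f u), f.
have Hl : forall u, lapl es (fun v => g v - f v) u = 0.
  by move=> u; rewrite lapl_sub Hg Hf subrr.
have E0 : \sum_u (g u - f u) * lapl es (fun v => g v - f v) u = 0.
  by apply: big1 => u _; rewrite Hl mulr0.
have := Horth (fun v => g v - f v) (energy0 Hs Hp E0).
under eq_bigr do rewrite mulrBr.
by rewrite sumrB => /eqP; rewrite subr_eq0 => /eqP.
Qed.

Lemma sum_delta (T : finType) (f : T -> rat) y : \sum_w f w * delta w y = f y.
Proof.
rewrite (bigD1 y) //= /delta eqxx mulr1 big1 ?addr0 // => w /negbTE.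
by rewrite eq_sym => ->; rewrite mulr0.
Qed.

Lemma lapl_lin (T : finType) (es : seq (T * T * rat)) (f : T -> rat) u :
  lapl es f u = \sum_w f w * lapl es (delta w) u.
Proof.
rewrite /lapl.
under [RHS]eq_bigr do rewrite big_distrr /=.
rewrite exchange_big /=; apply: eq_bigr => x _.
under eq_bigr do rewrite mulrA mulrBr.
by rewrite -mulr_suml sumrB !sum_delta.
Qed.

Lemma sum_enum_val (T : finType) (F : T -> rat) :
  \sum_(i < #|T|) F (enum_val i) = \sum_w F w.
Proof.
rewrite (reindex (@enum_rank T)) /=; last first.
  by exists enum_val => x _; rewrite ?enum_rankK ?enum_valK.
by apply: eq_bigr => w _; rewrite enum_rankK.
Qed.

Lemma lapl_exists (T : finType) (es : seq (T * T * rat)) (D : T -> rat) :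
  symes es -> pos_len es ->
  (forall h : T -> rat, (forall x, x \in es -> h x.1.1 = h x.1.2) -> \sum_u D u * h u = 0) ->
  exists f : T -> rat, forall u, lapl es f u = D u.
Proof.
move=> Hs Hp Horth.
pose M : 'M[rat]_(#|T|) := \matrix_(i, j) lapl es (delta (enum_val i)) (enum_val j).
pose d : 'rV[rat]_(#|T|) := \row_j D (enum_val j).
have HM : forall k l, M k l = lapl es (delta (enum_val k)) (enum_val l) by move=> k l; rewrite mxE.
have Hd : (d <= M)%MS.
  rewrite submxE; apply/eqP/matrixP => i j; rewrite !mxE.
  pose h w := cokermx M (enum_rank w) j.
  have Hlh : forall u, lapl es h u = \sum_k cokermx M k j * M k (enum_rank u).
    move=> u; rewrite lapl_lin -sum_enum_val; apply: eq_bigr => k _.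
    by rewrite /h enum_valK HM enum_rankK.
  have E0 : \sum_u h u * lapl es h u = 0.
    under eq_bigr do rewrite Hlh big_distrr /=.
    rewrite exchange_big /=; apply: big1 => k _.
    rewrite -sum_enum_val.
    have HC : \sum_l M k l * cokermx M l j = 0.
      have := congr1 (fun A : 'M[rat]_(#|T|) => A k j) (mulmx_coker M).
      by rewrite [X in X = _ -> _]mxE [X in _ = X -> _]mxE.
    transitivity (cokermx M k j * \sum_l M k l * cokermx M l j); last by rewrite HC mulr0.
    rewrite big_distrr; apply: eq_bigr => l _; rewrite /h !enum_valK /=; ring.
  have := Horth h (energy0 Hs Hp E0); rewrite -sum_enum_val => E; rewrite -[RHS]E.
  by apply: eq_bigr => k _; rewrite /d mxE /h enum_valK.
have [X HX] := submxP Hd.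
exists (fun w => X 0 (enum_rank w)) => u.
rewrite lapl_lin -sum_enum_val.
have := congr1 (fun A : 'rV[rat]_(#|T|) => A 0 (enum_rank u)) HX.
rewrite [X in X = _ -> _]mxE enum_rankK [X in _ = X -> _]mxE => ->.
apply: eq_bigr => k _; by rewrite enum_valK HM enum_rankK.
Qed.

Lemma sum_ddiff (T : finType) (a b : T) (h : T -> rat) :
  \sum_u ddiff a b u * h u = h a - h b.
Proof.
rewrite /ddiff; under eq_bigr do rewrite mulrBl; rewrite sumrB.
by congr (_ - _); rewrite -[RHS](sum_delta h); apply: eq_bigr => u _; rewrite /delta mulrC;
  case: eqP => [->|]; case: eqP => // ->.
Qed.

Lemma sum_inv (E : finType) (inv : E -> E) (EC : {set E}) (G : E -> rat) :
  involutive inv -> (forall e, e \in EC -> inv e \in EC) ->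
  \sum_(e <- enum EC) G (inv e) = \sum_(e <- enum EC) G e.
Proof.
move=> Hi HC; rewrite !big_enum /= [RHS](reindex_inj (inv_inj Hi)) /=.
apply: eq_bigl => e; apply/idP/idP; first exact: HC.
by move/HC; rewrite Hi.
Qed.

Lemma Cedges_sym (V E : finType) (src : E -> V) (inv : E -> E) (len : E -> rat) (EC : {set E}) :
  involutive inv -> (forall e, len (inv e) = len e) -> (forall e, e \in EC -> inv e \in EC) ->
  symes (Cedges src inv len EC).
Proof.
move=> Hi Hl HC F; rewrite /Cedges !big_map.
rewrite -(sum_inv (fun e => F (src e, tgt src inv e, len e)) Hi HC).
by apply: eq_bigr => e _; rewrite /revx /tgt /= Hi Hl.
Qed.

Lemma Cedges_pos (V E : finType) (src : E -> V) (inv : E -> E) (len : E -> rat) (EC : {set E}) :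
  (forall e, 0 < len e) -> pos_len (Cedges src inv len EC).
Proof. by move=> Hl; rewrite /pos_len /Cedges => x /mapP [e _ ->]; apply: Hl. Qed.

Lemma Cconst (V E : finType) (src : E -> V) (inv : E -> E) (VC : {set V}) (EC : {set E}) (h : V -> rat) :
  sub_connected src inv VC EC ->
  (forall e, e \in EC -> h (src e) = h (tgt src inv e)) ->
  forall u v, u \in VC -> v \in VC -> h u = h v.
Proof.
move=> Hc Hh u v uV vV; move: (Hc u v uV vV) => /connectP [p pth ->] {v vV}.
elim: p u pth {uV} => [|y p IH] u //= /andP [/existsP [e /and3P [eC /eqP se /eqP te]] pth].
by rewrite -(IH y pth) -se -te Hh.
Qed.

Lemma C_potential (V E : finType) (src : E -> V) (inv : E -> E) (len : E -> rat)
  (VC : {set V}) (EC : {set E}) (w0 w1 : V) :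
  involutive inv -> (forall e, len (inv e) = len e) -> (forall e, 0 < len e) ->
  (forall e, e \in EC -> inv e \in EC) -> sub_connected src inv VC EC ->
  w0 \in VC -> w1 \in VC ->
  exists f : V -> rat, (forall u, lapl (Cedges src inv len EC) f u = ddiff w1 w0 u) /\ f w0 = 0.
Proof.
move=> Hi Hl Hp HC Hc H0 H1.
have [f0 Hf0] : exists f : V -> rat, forall u, lapl (Cedges src inv len EC) f u = ddiff w1 w0 u.
  apply: lapl_exists; [exact: Cedges_sym | exact: Cedges_pos|].
  move=> h Hh; rewrite sum_ddiff; apply/eqP; rewrite subr_eq0; apply/eqP.
  apply: (Cconst Hc) => // e eC; apply: (Hh (src e, tgt src inv e, len e)).
  by apply/mapP; exists e; rewrite ?mem_enum.
exists (fun v => f0 v - f0 w0); split; last by rewrite subrr.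
by move=> u; rewrite lapl_shift.
Qed.

Lemma C_orth (V E : finType) (src : E -> V) (inv : E -> E) (len : E -> rat)
  (VC : {set V}) (EC : {set E}) a b :
  sub_connected src inv VC EC -> a \in VC -> b \in VC ->
  forall h : V -> rat, (forall x, x \in Cedges src inv len EC -> h x.1.1 = h x.1.2) ->
  \sum_u ddiff a b u * h u = 0.
Proof.
move=> Hc Ha Hb h Hh; rewrite sum_ddiff; apply/eqP; rewrite subr_eq0; apply/eqP.
apply: (Cconst Hc) => // e eC; apply: (Hh (src e, tgt src inv e, len e)).
by apply/mapP; exists e; rewrite ?mem_enum.
Qed.

Lemma rho_vertex (V E : finType) (src : E -> V) (inv : E -> E) (len : E -> rat)
  (VC : {set V}) (EC : {set E}) (w0 w1 : V) (f : V -> rat) v :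
  involutive inv -> (forall e, len (inv e) = len e) -> (forall e, 0 < len e) ->
  (forall e, e \in EC -> inv e \in EC) -> sub_connected src inv VC EC ->
  w0 \in VC -> v \in VC ->
  (forall u, lapl (Cedges src inv len EC) f u = ddiff w1 w0 u) -> f w0 = 0 ->
  height_pairing (Cedges src inv len EC) (ddiff v w0) (ddiff w1 w0) = f v.
Proof.
move=> Hi Hl Hp HC Hc H0 Hv Hf Hf0.
rewrite (hp_eval (f := f)) //; [|exact: Cedges_sym|exact: Cedges_pos|exact: (C_orth (len := len) Hc Hv H0)].
by rewrite sum_ddiff Hf0 subr0.
Qed.

Definition Phi (V E : finType) (src : E -> V) (inv : E -> E) (len : E -> rat)
  (F : V -> rat) (e : E) (t : rat) : rat :=
  F (src e) + t * (F (tgt src inv e) - F (src e)) / len e.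

Lemma sub_sym (V E : finType) (src : E -> V) (inv : E -> E) (len : E -> rat)
  (EC : {set E}) e0 t :
  involutive inv -> (forall e, inv e != e) -> (forall e, len (inv e) = len e) ->
  (forall e, e \in EC -> inv e \in EC) ->
  symes (Cedges_sub src inv len EC e0 t).
Proof.
move=> Hi Hne Hl HC F; rewrite /Cedges_sub !big_flatten /= !big_map.
rewrite -(sum_inv _ Hi HC); apply: eq_bigr => e _.
have Hinv0 : (inv e0 == e0) = false by apply/negbTE.
case: (eqVneq e e0) => [->|ne0].
  rewrite Hinv0 eqxx !big_cons !big_nil /revx /tgt /= Hi Hl !addr0 addrC //.
case: (eqVneq e (inv e0)) => [->|ne1].
  rewrite Hi eqxx !big_cons !big_nil /revx /tgt /= Hi Hl !addr0 addrC //.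
have -> : (inv e == e0) = false.
  by apply/negbTE; apply: contra ne1 => /eqP <-; rewrite Hi.
have -> : (inv e == inv e0) = false.
  by apply/negbTE; apply: contra ne0 => /eqP /(inv_inj Hi) ->.
by rewrite !big_cons !big_nil /revx /tgt /= Hi Hl.
Qed.

Lemma sub_pos (V E : finType) (src : E -> V) (inv : E -> E) (len : E -> rat)
  (EC : {set E}) e0 t :
  (forall e, 0 < len e) -> (forall e, len (inv e) = len e) -> 0 < t < len e0 ->
  pos_len (Cedges_sub src inv len EC e0 t).
Proof.
move=> Hp Hl /andP [t0 tL]; rewrite /pos_len /Cedges_sub => x /flatten_mapP [e _].
case: ifP => [/eqP ->|_]; first by rewrite !inE => /orP [] /eqP -> /=; rewrite ?subr_gt0.
case: ifP => [/eqP ->|_]; first by rewrite !inE => /orP [] /eqP -> /=; rewrite ?Hl ?subr_gt0.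
by rewrite inE => /eqP -> /=; apply: Hp.
Qed.

Definition gsub (V E : finType) (src : E -> V) (inv : E -> E) (len : E -> rat)
  (f : V -> rat) (e0 : E) (t : rat) (o : option V) : rat :=
  match o with Some v => f v | None => Phi src inv len f e0 t end.

Lemma eqSome (T : eqType) (a b : T) : (Some a == Some b) = (a == b).
Proof. by apply/eqP/eqP => [[]|->]. Qed.

Lemma sub_lapl_some (V E : finType) (src : E -> V) (inv : E -> E) (len : E -> rat)
  (EC : {set E}) e0 t (f : V -> rat) v :
  involutive inv -> (forall e, inv e != e) -> (forall e, len (inv e) = len e) ->
  0 < t < len e0 ->
  lapl (Cedges_sub src inv len EC e0 t) (gsub src inv len f e0 t) (Some v)
  = lapl (Cedges src inv len EC) f v.
Proof.
move=> Hi Hne Hl /andP [t0 tL].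
rewrite /lapl /Cedges_sub /Cedges big_flatten /= !big_map [RHS]big_mkcond.
apply: eq_bigr => e _.
have Hinv0 : (inv e0 == e0) = false by apply/negbTE.
case: (eqVneq e e0) => [->|ne0].
  rewrite !big_cons !big_nil /= /gsub /Phi eqSome andbT addr0.
  have L0 : len e0 != 0 by rewrite gt_eqF // (lt_trans t0 tL).
  have T0 : t != 0 by rewrite gt_eqF.
  case: (eqVneq (src e0) v) => [<-|] //=.
  case: (eqVneq (tgt src inv e0) (src e0)) => [->|_] /=.
    by rewrite subrr mulr0 mul0r addr0 subrr mul0r.
  by field; rewrite L0 T0.

case: (eqVneq e (inv e0)) => [->|ne1].
  rewrite !big_cons !big_nil /= /gsub /Phi eqSome andbT addr0.
  have L0 : len e0 != 0 by rewrite gt_eqF // (lt_trans t0 tL).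
  have T0 : len e0 - t != 0 by rewrite gt_eqF // subr_gt0.
  rewrite Hl; case: (eqVneq (src (inv e0)) v) => [<-|] //=.
  have Et : tgt src inv (inv e0) = src e0 by rewrite /tgt Hi.
  rewrite Et /tgt.
  case: (eqVneq (src e0) (src (inv e0))) => [->|_] /=.
    by rewrite !subrr mulr0 mul0r subr0 subrr mul0r.
  by field; rewrite L0 T0.
by rewrite !big_cons !big_nil /= eqSome addr0.
Qed.

Lemma sub_lapl_none (V E : finType) (src : E -> V) (inv : E -> E) (len : E -> rat)
  (EC : {set E}) e0 t (f : V -> rat) :
  involutive inv -> (forall e, inv e != e) -> (forall e, len (inv e) = len e) ->
  0 < t < len e0 -> e0 \in EC -> inv e0 \in EC ->
  lapl (Cedges_sub src inv len EC e0 t) (gsub src inv len f e0 t) None = 0.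
Proof.
move=> Hi Hne Hl /andP [t0 tL] H0 H1.
have L0 : len e0 != 0 by rewrite gt_eqF // (lt_trans t0 tL).
have T0 : t != 0 by rewrite gt_eqF.
have T1 : len e0 - t != 0 by rewrite gt_eqF // subr_gt0.
rewrite /lapl /Cedges_sub big_flatten /= big_map.
set A := (Phi src inv len f e0 t - f (tgt src inv e0)) / (len e0 - t).
set B := (Phi src inv len f e0 t - f (src e0)) / t.
have Hinv0 : (inv e0 == e0) = false by apply/negbTE.
transitivity (\sum_(e <- enum EC) (if e == e0 then A else if e == inv e0 then B else 0)).
  apply: eq_bigr => e _.
  case: (eqVneq e e0) => [->|ne0].
    by rewrite !big_cons !big_nil /= addr0.
  case: (eqVneq e (inv e0)) => [->|ne1].
    by rewrite !big_cons !big_nil /= addr0 /tgt Hi.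
  by rewrite !big_cons !big_nil.
rewrite big_enum /= (bigD1 e0) //= (bigD1 (inv e0)) /=; last by rewrite H1 Hne.
rewrite eqxx Hinv0 eqxx big1 ?addr0; last first.
  by move=> e /andP [/andP [_ /negbTE ->] /negbTE ->].
rewrite /A /B /Phi; by field; rewrite L0 T0 T1.
Qed.

Lemma rho_interior (V E : finType) (src : E -> V) (inv : E -> E) (len : E -> rat)
  (VC : {set V}) (EC : {set E}) (w0 w1 : V) (f : V -> rat) e0 t :
  involutive inv -> (forall e, inv e != e) -> (forall e, len (inv e) = len e) ->
  (forall e, 0 < len e) ->
  (forall e, e \in EC -> inv e \in EC) -> (forall e, e \in EC -> src e \in VC) ->
  sub_connected src inv VC EC -> w0 \in VC -> e0 \in EC -> 0 < t < len e0 ->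
  (forall u, lapl (Cedges src inv len EC) f u = ddiff w1 w0 u) -> f w0 = 0 ->
  height_pairing (Cedges_sub src inv len EC e0 t) (ddiff None (Some w0)) (ddiff (Some w1) (Some w0))
  = Phi src inv len f e0 t.
Proof.
move=> Hi Hne Hl Hp HC Hsrc Hc H0 He0 Ht Hf Hf0.
rewrite (hp_eval (f := gsub src inv len f e0 t)).
- by rewrite sum_ddiff /= Hf0 subr0.
- exact: sub_sym.
- exact: sub_pos.
- case=> [v|].
    by rewrite sub_lapl_some // Hf /ddiff /delta !eqSome.
  by rewrite sub_lapl_none // ?HC // /ddiff /delta.
move=> h Hh; rewrite sum_ddiff; apply/eqP; rewrite subr_eq0; apply/eqP.
have mem : forall e x, e \in EC -> x \in (if e == e0 then
                  [:: (Some (src e), None, t); (None, Some (tgt src inv e), len e - t)]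
                else if e == inv e0 then
                  [:: (Some (src e), None, len e - t); (None, Some (tgt src inv e), t)]
                else [:: (Some (src e), Some (tgt src inv e), len e)]) ->
     x \in Cedges_sub src inv len EC e0 t.
  move=> e x eC xB; apply/flatten_mapP; exists e => //; by rewrite mem_enum.
have HN : h None = h (Some (src e0)).
  symmetry; apply: (Hh (Some (src e0), None, t)); apply: (mem e0) => //.
  by rewrite eqxx mem_head.
rewrite HN; apply: (Cconst (h := fun v => h (Some v)) Hc); rewrite ?Hsrc //.
move=> e eC /=.
case: (eqVneq e e0) => [Ee|ne0].
  have E1 : h (Some (src e)) = h None.
    by apply: (Hh (Some (src e), None, t)); apply: (mem e) => //; rewrite Ee eqxx mem_head.
  have E2 : h None = h (Some (tgt src inv e)).
    by apply: (Hh (None, Some (tgt src inv e), len e - t)); apply: (mem e) => //;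
      rewrite Ee eqxx !inE eqxx orbT.
  by rewrite E1 E2.
case: (eqVneq e (inv e0)) => [Ee|ne1].
  have E1 : h (Some (src e)) = h None.
    by apply: (Hh (Some (src e), None, len e - t)); apply: (mem e) => //;
      rewrite (negbTE ne0) Ee eqxx mem_head.
  have E2 : h None = h (Some (tgt src inv e)).
    by apply: (Hh (None, Some (tgt src inv e), t)); apply: (mem e) => //;
      rewrite (negbTE ne0) Ee eqxx !inE eqxx orbT.
  by rewrite E1 E2.
apply: (Hh (Some (src e), Some (tgt src inv e), len e)); apply: (mem e) => //.
by rewrite (negbTE ne0) (negbTE ne1) mem_head.
Qed.

Lemma mem_zip2 (S T : eqType) (s : seq S) (t : seq T) a b :
  (a, b) \in zip s t -> a \in s /\ b \in t.
Proof.
elim: s t => [|x s IH] [|y t] //=; rewrite inE => /orP [/eqP [-> ->]|H].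
  by split; apply: mem_head.
by have [H1 H2] := IH t H; split; apply/orP; right.
Qed.

Lemma pairs_lt (x : rat) r a b : path <%R x r -> (a, b) \in zip (x :: r) r -> a < b.
Proof.
elim: r x => [|y r IH] x //= /andP [xy pth]; rewrite inE => /orP [/eqP [-> ->] //|H].
exact: (IH y pth H).
Qed.

Lemma path_min (x : rat) r z : path <%R x r -> z \in r -> x < z.
Proof.
move=> pth zr; have := order_path_min lt_trans pth.
by move/allP => /(_ z zr).
Qed.

Lemma pairs_gap (x : rat) r a b z : path <%R x r -> (a, b) \in zip (x :: r) r ->
  z \in x :: r -> (z <= a) || (b <= z).
Proof.
elim: r x => [|y r IH] x //= /andP [xy pth]; rewrite inE => /orP [/eqP [-> ->]|H].
  rewrite inE => /orP [/eqP ->|zr]; first by rewrite lexx.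
  rewrite inE in zr; case/orP: zr => [/eqP ->|zr]; first by rewrite lexx orbT.
  by rewrite (ltW (path_min pth zr)) orbT.
rewrite inE => /orP [/eqP ->|zr]; last exact: (IH y pth H zr).
have [ar _] := mem_zip2 H.
rewrite inE in ar; case/orP: ar => [/eqP ->|ar]; first by rewrite ltW.
by rewrite ltW // (lt_trans xy (path_min pth ar)).
Qed.

Lemma path_le_last (x : rat) r z : path <%R x r -> z \in x :: r -> z <= last x r.
Proof.
elim: r x z => [|y r IH] x z /=; first by rewrite inE => _ /eqP ->.
move=> /andP [xy pth]; rewrite inE => /orP [/eqP ->|zr]; last exact: IH.
exact: (le_trans (ltW xy) (IH y y pth (mem_head _ _))).
Qed.

Lemma telescope (h : rat -> rat) (x : rat) r :
  \sum_(ab <- zip (x :: r) r) (h ab.2 - h ab.1) = h (last x r) - h x.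
Proof.
elim: r x => [|y r IH] x /=; first by rewrite big_nil subrr.
by rewrite big_cons IH /=; ring.
Qed.

Lemma pairs_uniq (x : rat) r : path <%R x r -> uniq (zip (x :: r) r).
Proof.
elim: r x => [|y r IH] x //= /andP [xy pth]; rewrite IH // andbT.
apply/negP => /mem_zip2 [H _]; move: H; rewrite inE => /orP [/eqP E|H].
  by move: xy; rewrite E ltxx.
by have := path_min pth H; rewrite ltNge ltW.
Qed.

Lemma cover (x : rat) r z : x <= z -> z <= last x r ->
  z \in x :: r \/ exists a b, (a, b) \in zip (x :: r) r /\ a < z < b.
Proof.
elim: r x => [|y r IH] x /= xz zl.
  by left; rewrite inE eq_le xz zl.
case: (ltP z y) => zy.
  case: (eqVneq z x) => [->|nzx]; first by left; rewrite mem_head.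
  right; exists x, y; rewrite mem_head zy andbT; split => //.
  by rewrite lt_neqAle xz eq_sym nzx.
case: (IH y zy zl) => [H|[a [b [H1 H2]]]].
  by left; rewrite inE H orbT.
by right; exists a, b; rewrite inE H1 orbT.
Qed.

Lemma sorted_points (l : seq rat) : sorted <%R (sort <=%R (undup l)).
Proof.
by rewrite lt_sorted_uniq_le sort_uniq undup_uniq sort_sorted //; exact: le_total.
Qed.

Definition pts (cuts : seq rat) (L : rat) := sort <=%R (undup [:: 0, L & cuts]).

Lemma pieces_pts cuts L : pieces cuts L = zip (pts cuts L) (behead (pts cuts L)).
Proof. by []. Qed.

Lemma mem_pts cuts L z : (z \in pts cuts L) = (z \in [:: 0, L & cuts]).
Proof. by rewrite /pts mem_sort mem_undup. Qed.

Lemma pts_bound cuts L z : 0 <= L -> (forall t, t \in cuts -> 0 < t < L) ->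
  z \in pts cuts L -> 0 <= z <= L.
Proof.
move=> L0 Hc; rewrite mem_pts !inE => /orP [/eqP ->|/orP [/eqP ->|/Hc /andP [H1 H2]]].
- by rewrite lexx.
- by rewrite lexx L0.
- by rewrite !ltW.
Qed.

Lemma pts_shape cuts L : 0 < L -> (forall t, t \in cuts -> 0 < t < L) ->
  exists r, [/\ pts cuts L = 0 :: r, last 0 r = L & path <%R 0 r].
Proof.
move=> L0 Hc.
have Hs := sorted_points [:: 0, L & cuts]; rewrite -/(pts cuts L) in Hs.
have Hb := pts_bound (ltW L0) Hc.
have m0 : 0 \in pts cuts L by rewrite mem_pts mem_head.
have mL : L \in pts cuts L by rewrite mem_pts !inE eqxx orbT.
move: Hs Hb m0 mL; case: (pts cuts L) => [|x r] //= pth Hb.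
rewrite inE => /orP [/eqP x0|m0]; last first.
  have := path_min pth m0; have := Hb x (mem_head _ _).
  by case/andP => H _; rewrite ltNge H.
subst x => mL; exists r; split => //.
apply/eqP; rewrite eq_le; apply/andP; split.
  by have /andP [_ ->] := Hb _ (mem_last 0 r).
exact: path_le_last.
Qed.

Definition clamp (a' b' y : rat) := if y <= a' then a' else if b' <= y then b' else y.

Lemma clamp_step a' b' u v : a' < b' -> u < v -> (u <= a') || (b' <= u) ->
  (v <= a') || (b' <= v) -> (u <= a' -> b' <= v -> u = a' /\ v = b') ->
  clamp a' b' v - clamp a' b' u = if (u == a') && (v == b') then b' - a' else 0.
Proof.
move=> ab uv Hu Hv Ho; rewrite /clamp.
case: (lerP u a') => ua; case: (lerP v a') => va //=.
- have -> : (u == a') && (v == b') = false.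
    apply/negbTE; apply/nandP; right; apply/eqP => E; move: va; rewrite E leNgt ab.
    done.
  by rewrite subrr.
- have vb : b' <= v by move: Hv; rewrite leNgt va.
  have [E1 E2] := Ho ua vb.
  by rewrite vb E1 E2 !eqxx.
- have : v < u by apply: (le_lt_trans va ua).
  by rewrite ltNge (ltW uv).
- have ub : b' <= u by move: Hu; rewrite leNgt ua.
  have vb : b' <= v by apply: (le_trans ub); exact: ltW.
  rewrite ub vb subrr.
  have -> : (u == a') = false by apply/negbTE; rewrite gt_eqF.
  by [].
Qed.

Lemma edge_sum (r : seq rat) (L y0 y1 a' b' : rat) (Ph : rat -> rat) :
  0 < L -> path <%R 0 r -> last 0 r = L -> a' < b' ->
  (forall t, Ph t = y0 + t * (y1 - y0) / L) ->
  (forall z, z \in 0 :: r -> (Ph z <= a') || (b' <= Ph z)) ->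
  (forall a b, (a, b) \in zip (0 :: r) r -> Ph a < Ph b -> Ph a <= a' -> b' <= Ph b ->
     Ph a = a' /\ Ph b = b') ->
  \sum_(ab <- zip (0 :: r) r | (Ph ab.1 == a') && (Ph ab.2 == b')) 1 / (ab.2 - ab.1) =
   if y0 < y1 then (y1 - y0) / L * (clamp a' b' y1 - clamp a' b' y0) / (b' - a') ^+ 2 else 0.
Proof.
move=> L0 pth lL ab HPh Hg Ho.
have Hd : forall a b, Ph b - Ph a = (b - a) * ((y1 - y0) / L).
  by move=> a b; rewrite !HPh; field; rewrite gt_eqF.
have L0' : L != 0 by rewrite gt_eqF.
have ab0 : b' - a' != 0 by rewrite subr_eq0 gt_eqF.
case: ifP => y01; last first.
  rewrite big_seq_cond; apply: big1 => [[a b]] /= /andP [mem /andP [/eqP E1 /eqP E2]].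
  have := Hd a b; rewrite E1 E2 => E.
  have ablt := pairs_lt pth mem.
  have : (b - a) * ((y1 - y0) / L) <= 0.
    rewrite pmulr_rle0 ?subr_gt0 // ler_pdivrMr // mul0r.
    by rewrite subr_le0 leNgt y01.
  by rewrite -E subr_le0 leNgt ab.
have k0 : 0 < (y1 - y0) / L by rewrite divr_gt0 // subr_gt0.
transitivity (\sum_(ab <- zip (0 :: r) r)
   ((y1 - y0) / L / (b' - a') ^+ 2 * (clamp a' b' (Ph ab.2) - clamp a' b' (Ph ab.1)))); last first.
  rewrite -big_distrr /= (telescope (fun y => clamp a' b' (Ph y))) lL !HPh.
  have -> : y0 + L * (y1 - y0) / L = y1 by field.
  have -> : y0 + 0 * (y1 - y0) / L = y0 by rewrite mul0r mul0r addr0.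
  by rewrite mulrAC.
rewrite big_mkcond /= big_seq [RHS]big_seq; apply: eq_bigr => [[a b]] /= mem.
have ablt := pairs_lt pth mem.
have [ma mb] := mem_zip2 mem.
have PhL : Ph a < Ph b by rewrite -subr_gt0 Hd mulr_gt0 // subr_gt0.
rewrite clamp_step //; last 3 first.
- exact: Hg.
- by apply: Hg; rewrite inE mb orbT.
- exact: Ho.
case: ifP => [/andP [/eqP E1 /eqP E2]|_]; last by rewrite mulr0.
have := Hd a b; rewrite E1 E2 => E.
rewrite E; field.
by rewrite L0' !gt_eqF // subr_gt0.
Qed.

Lemma core_sum (V E : finType) (src : E -> V) (inv : E -> E) (len : E -> rat)
  (EC : {set E}) (cut : E -> seq rat) (F : V -> rat) (x0 x1 : V) (a' b' : rat) :
  involutive inv -> (forall e, len (inv e) = len e) -> (forall e, 0 < len e) ->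
  (forall e, e \in EC -> inv e \in EC) ->
  (forall e t, t \in cut e -> 0 < t < len e) ->
  (forall u, lapl (Cedges src inv len EC) F u = ddiff x1 x0 u) ->
  F x0 <= a' -> b' <= F x1 -> a' < b' ->
  (forall e z, e \in EC -> z \in pts (cut e) (len e) ->
     (Phi src inv len F e z <= a') || (b' <= Phi src inv len F e z)) ->
  (forall e a b, e \in EC -> (a, b) \in pieces (cut e) (len e) ->
     Phi src inv len F e a < Phi src inv len F e b ->
     Phi src inv len F e a <= a' -> b' <= Phi src inv len F e b ->
     Phi src inv len F e a = a' /\ Phi src inv len F e b = b') ->
  \sum_(p <- sub_edges len cut | (p.1.1 \in EC) && (Phi src inv len F p.1.1 p.1.2 == a')
                                   && (Phi src inv len F p.1.1 p.2 == b')) 1 / plen p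
  = 1 / (b' - a').
Proof.
move=> Hi Hl Hp HC Hcut HF Fx0 Fx1 ab HE HO.
have ab0 : b' - a' != 0 by rewrite subr_eq0 gt_eqF.
rewrite /sub_edges big_flatten /= big_map.
under eq_bigr => e _ do rewrite big_map /=.
transitivity (\sum_(e <- enum EC)
  (if F (src e) < F (tgt src inv e) then
     (F (tgt src inv e) - F (src e)) / len e *
     (clamp a' b' (F (tgt src inv e)) - clamp a' b' (F (src e))) / (b' - a') ^+ 2 else 0)).
  rewrite big_enum /= [RHS]big_enum [RHS]big_mkcond /=.
  apply: eq_big => // e _.
  case: ifP => eC; last by rewrite big1.
  have [r [Er lr pth]] := pts_shape (Hp e) (Hcut e).
  rewrite /= pieces_pts Er /=.
  rewrite -(edge_sum (Ph := Phi src inv len F e) (Hp e) pth lr ab) //.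
  - by move=> z zr; apply: HE => //; rewrite Er.
  - by move=> a b mem; apply: HO => //; rewrite pieces_pts Er.
transitivity ((\sum_(x <- Cedges src inv len EC | F x.1.1 < F x.1.2)
   (F x.1.2 - F x.1.1) * (clamp a' b' (F x.1.2) - clamp a' b' (F x.1.1)) / x.2) / (b' - a') ^+ 2).
  rewrite /Cedges big_map [in RHS]big_mkcond mulr_suml; apply: eq_bigr => e _ /=.
  case: ifP => _; last by rewrite mul0r.
  ring.
rewrite (KI F (fun u => clamp a' b' (F u))); last exact: Cedges_sym.
under eq_bigr do rewrite HF mulrC.
rewrite sum_ddiff /clamp Fx0.
have -> : (F x1 <= a') = false by apply/negbTE; rewrite -ltNge (lt_le_trans ab Fx1).
rewrite Fx1; field; by rewrite ab0.
Qed.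

Lemma big_pred1_seq' (I : eqType) (r : seq I) (i : I) (F : I -> rat) :
  uniq r -> i \in r -> \sum_(j <- r | j == i) F j = F i.
Proof.
move=> ur ir; rewrite (big_rem _ ir) eqxx /= big_seq_cond big1 ?addr0 //.
move=> j /andP [jr /eqP ji]; subst j.
by move: jr; rewrite mem_rem_uniq // inE eqxx.
Qed.

Lemma pieces_lt cuts L a b : (a, b) \in pieces cuts L -> a < b.
Proof.
rewrite pieces_pts; have := sorted_points [:: 0, L & cuts]; rewrite -/(pts cuts L).
case: (pts cuts L) => [|x r] //=; exact: pairs_lt.
Qed.

Lemma pieces_gap cuts L a b z : (a, b) \in pieces cuts L -> z \in pts cuts L ->
  (z <= a) || (b <= z).
Proof.
rewrite pieces_pts; have := sorted_points [:: 0, L & cuts]; rewrite -/(pts cuts L).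
case: (pts cuts L) => [|x r] //=; exact: pairs_gap.
Qed.

Lemma pieces_mem cuts L a b : (a, b) \in pieces cuts L -> a \in pts cuts L /\ b \in pts cuts L.
Proof.
rewrite pieces_pts => /mem_zip2 [H1 H2]; split => //.
by move: H2; case: (pts cuts L) => [|x r] //= H; rewrite inE H orbT.
Qed.

Lemma pieces_uniq cuts L : uniq (pieces cuts L).
Proof.
rewrite pieces_pts; have := sorted_points [:: 0, L & cuts]; rewrite -/(pts cuts L).
case: (pts cuts L) => [|x r] //=; exact: pairs_uniq.
Qed.

Lemma pts_endpoint cuts L z : 0 < L -> (forall t, t \in cuts -> 0 < t < L) ->
  z \in pts cuts L -> exists a b, (a, b) \in pieces cuts L /\ (z = a \/ z = b).
Proof.
move=> L0 Hc; have [r [Er lr pth]] := pts_shape L0 Hc.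
rewrite pieces_pts Er /=; case: r Er lr pth => [|y r] Er lr pth.
  by move: lr L0 => /= <-; rewrite ltxx.
rewrite inE => /orP [/eqP ->|zr].
  by exists 0, y; rewrite mem_head; split => //; left.
have : z \in unzip2 (zip (0 :: y :: r) (y :: r)) by rewrite unzip2_zip //= ltnW.
case/mapP => [[a b] mem /= ->]; by exists a, b; split => //; right.
Qed.

Lemma mem_sub_edges (E : finType) (len : E -> rat) (cut : E -> seq rat) e a b :
  ((e, a, b) \in sub_edges len cut) = ((a, b) \in pieces (cut e) (len e)).
Proof.
apply/idP/idP.
  case/flatten_mapP => e1 _ /mapP [[a1 b1] mem /= [E1 E2 E3]].
  by subst.
move=> mem; apply/flatten_mapP; exists e; first by rewrite mem_enum.
by apply/mapP; exists (a, b).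
Qed.

Lemma mem_sub_edges' (V E : finType) (src : E -> V) (inv : E -> E) (len : E -> rat)
  (EC : {set E}) w0 w1 (cut' : E + bool -> seq rat) x a b :
  (x, a, b) \in sub_edges' src inv len EC w0 w1 cut' ->
  x \in edges' EC /\ (a, b) \in pieces (cut' x) (len' src inv len EC w0 w1 x).
Proof.
case/flatten_mapP => x1 x1m /mapP [[a1 b1] mem /= [E1 E2 E3]].
by subst.
Qed.

Lemma same_pieces cuts cuts' L : 0 < L ->
  (forall t, t \in cuts -> 0 < t < L) -> (forall t, t \in cuts' -> 0 < t < L) ->
  (forall a b, (a, b) \in pieces cuts L -> (a, b) \in pieces cuts' L) ->
  pieces cuts' L = pieces cuts L.
Proof.
move=> L0 Hc Hc' Hsub.
suff E : pts cuts' L = pts cuts L by rewrite !pieces_pts E.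
apply: (irr_sorted_eq (leT := <%R)); [exact: lt_trans|exact: ltxx|exact: sorted_points|exact: sorted_points|].
move=> z; apply/idP/idP => zm.
  have /andP [z0 zL] := pts_bound (ltW L0) Hc' zm.
  have [r [Er lr pth]] := pts_shape L0 Hc.
  have : 0 <= z <= last 0 r by rewrite lr z0 zL.
  case/andP => H1 H2; case: (cover H1 H2) => [|[a [b [mem /andP [az zb]]]]]; first by rewrite Er.
  have mem' : (a, b) \in pieces cuts' L by apply: Hsub; rewrite pieces_pts Er.
  by have := pieces_gap mem' zm; rewrite leNgt az /= leNgt zb.
have [a [b [mem [->|->]]]] := pts_endpoint L0 Hc zm.
  by have [] := pieces_mem (Hsub _ _ mem).
by have [] := pieces_mem (Hsub _ _ mem).
Qed.

Lemma rho_Phi (V E : finType) (src : E -> V) (inv : E -> E) (len : E -> rat)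
  (VC : {set V}) (EC : {set E}) (w0 w1 : V) (f : V -> rat) e t :
  involutive inv -> (forall e, inv e != e) -> (forall e, len (inv e) = len e) ->
  (forall e, 0 < len e) ->
  (forall e, e \in EC -> inv e \in EC) -> (forall e, e \in EC -> src e \in VC) ->
  sub_connected src inv VC EC -> w0 \in VC ->
  (forall u, lapl (Cedges src inv len EC) f u = ddiff w1 w0 u) -> f w0 = 0 ->
  e \in EC -> 0 <= t <= len e ->
  rho_pt src inv len EC w0 w1 e t = Phi src inv len f e t.
Proof.
move=> Hi Hne Hl Hp HC Hsrc Hc H0 Hf Hf0 eC /andP [t0 tL].
have L0 : len e != 0 by rewrite gt_eqF.
rewrite /rho_pt /Phi; case: eqP => [->|nt0].
  by rewrite (rho_vertex (VC := VC) (f := f)) ?Hsrc // mul0r mul0r addr0.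
case: eqP => [->|ntL].
  rewrite (rho_vertex (VC := VC) (f := f)) //; last by apply: Hsrc; apply: HC.
  by field.
apply: (rho_interior (VC := VC)) => //.
rewrite !lt_neqAle t0 tL !andbT; apply/andP; split; apply/eqP => Eq; [by apply: nt0 | by apply: ntL].
Qed.

Lemma lapl_neg (T : finType) (es : seq (T * T * rat)) (f : T -> rat) c u :
  lapl es (fun v => c - f v) u = - lapl es f u.
Proof.
rewrite /lapl -sumrN; apply: eq_bigr => x _; rewrite -mulNr; congr (_ * _); ring.
Qed.

Lemma Phi_neg (V E : finType) (src : E -> V) (inv : E -> E) (len : E -> rat) (f : V -> rat) R e t :
  Phi src inv len (fun v => R - f v) e t = R - Phi src inv len f e t.
Proof. rewrite /Phi; ring. Qed.

Lemma pts_flip (ct cf : seq rat) R t :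
  cf =i [seq R - t | t <- ct] ->
  (t \in pts ct R) = (R - t \in pts cf R).
Proof.
move=> H; rewrite !mem_pts !inE H.
rewrite (mem_map (f := fun t => R - t)); last by move=> x y /= /addrI /oppr_inj.
have -> : (R - t == 0) = (t == R) by rewrite subr_eq0 eq_sym.
have -> : (R - t == R) = (t == 0) by rewrite -subr_eq0 addrAC subrr add0r oppr_eq0.
by rewrite orbCA.
Qed.

Unset Implicit Arguments.

Theorem proposition9p5 (V E H : finType) (src : E -> V) (inv : E -> E)
  (hsrc : H -> V) (len : E -> rat)
  (VC : {set V}) (EC : {set E}) (HC : {set H}) (w0 w1 : V)
  (cut : E -> seq rat) (cut' : E + bool -> seq rat) :
  is_rmgraph src inv len ->
  is_subgraph src inv hsrc VC EC HC ->
  sub_connected src inv VC EC ->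
  w0 \in VC -> w1 \in VC -> w0 != w1 ->
  (forall w, w \in VC -> w != w0 -> w != w1 ->
     (forall e, src e = w \/ tgt src inv e = w -> e \in EC) /\
     (forall h, hsrc h = w -> h \in HC)) ->
  valid_cuts inv len cut ->
  valid_cuts' src inv len EC w0 w1 cut' ->
  rho_is_morphism src inv len EC w0 w1 cut cut' ->
  forall q, q \in sub_edges' src inv len EC w0 w1 cut' ->
    1 / plen q = \sum_(p <- sub_edges len cut | rho_edge src inv len EC w0 w1 p == Some q)
                   1 / plen p.
Proof.
move=> Hrm Hsub Hconn Hw0 Hw1 _ _ Hcut Hcut' Hmor q Hq.
case: Hrm => Hi Hne Hl Hp _.
case: Hsub => HCl Hsrc _.
case: Hcut' => Hc1 Hc2 Hc3.
have [f [Hf Hf0]] := C_potential Hi Hl Hp HCl Hconn Hw0 Hw1.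
have HR : eC_len src inv len EC w0 w1 = f w1.
  by rewrite /eC_len (rho_vertex (VC := VC) (f := f)).
have Hcutv : forall e t, t \in cut e -> 0 < t < len e by move=> e t /((Hcut e).1).
have R0 : 0 <= f w1.
  have := KI f f (Cedges_sym src Hi Hl HCl).
  under [RHS]eq_bigr do rewrite Hf mulrC.
  rewrite sum_ddiff Hf0 subr0 => <-.
  rewrite big_seq_cond; apply: sumr_ge0 => x /andP [xm _].
  apply: divr_ge0; first by rewrite -expr2 sqr_ge0.
  by apply: ltW; apply: (Cedges_pos (src:=src) (inv:=inv) (EC:=EC) Hp xm).
have Hrho : forall e a b, e \in EC -> (a, b) \in pieces (cut e) (len e) ->
    rho_pt src inv len EC w0 w1 e a = Phi src inv len f e a /\
    rho_pt src inv len EC w0 w1 e b = Phi src inv len f e b.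
  move=> e a b eC mem; have [ma mb] := pieces_mem mem.
  by split; apply: (rho_Phi (VC := VC)) => //; apply: (pts_bound (ltW (Hp e)) (Hcutv e)).
case: q Hq => [[x a'] b'] Hq; have [xm mem'] := mem_sub_edges' Hq.
case: x xm mem' Hq => [e|bb] xm mem' Hq.
- have eNC : e \notin EC.
    move: xm; rewrite /edges' mem_cat => /orP [/mapP [e1 e1m [->]]|] //.
    by move: e1m; rewrite mem_enum inE.
  have [Hc1a _] := Hc1 e eNC.
  rewrite /= in mem'.
  have Hsp : forall a b, (a, b) \in pieces (cut e) (len e) -> (a, b) \in pieces (cut' (inl e)) (len e).
    move=> a b mem; have := Hmor (e, a, b); rewrite mem_sub_edges => /(_ mem).
    rewrite /rho_edge (negbTE eNC) => /mem_sub_edges' [_ //].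
  have Epc := same_pieces (Hp e) (Hcutv e) Hc1a Hsp.
  rewrite Epc in mem'.
  transitivity (\sum_(p <- sub_edges len cut | p == (e, a', b')) 1 / plen p).
    rewrite /sub_edges big_flatten big_map /=.
    under eq_bigr => e1 _ do rewrite big_map /=.
    rewrite big_enum /= (bigD1 e) //= [X in _ + X]big1 ?addr0; last first.
      move=> e1 ne1; apply: big1 => ab /eqP [E1]; by move: ne1; rewrite E1 eqxx.
    rewrite (eq_bigl (fun ab => ab == (a', b'))); last first.
      by move=> [a b] /=; apply/eqP/eqP => [[-> ->]|[-> ->]].
    by rewrite big_pred1_seq' // pieces_uniq.
  apply: eq_bigl => [[[e1 a] b]] /=; rewrite /rho_edge.
  case: ifP => e1C.
    have ne : (e1 == e) = false by apply/negbTE; apply: contraTneq e1C => ->.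
    rewrite !xpair_eqE ne /=.
    by case: ifP => _ //; case: ifP.
  by apply/eqP/eqP => [[-> -> ->]|[-> -> ->]].
- rewrite /= HR in mem'.
  have ab := pieces_lt mem'.
  have Hc2' : forall b t, t \in cut' (inr b) -> 0 < t < f w1 by move=> b t; rewrite -HR; apply: Hc2.
  have [ma' mb'] := pieces_mem mem'.
  have /andP [a0 aR] := pts_bound R0 (Hc2' bb) ma'.
  have /andP [b0 bR] := pts_bound R0 (Hc2' bb) mb'.
  have Hflip : forall t, (t \in pts (cut' (inr true)) (f w1)) = (f w1 - t \in pts (cut' (inr false)) (f w1)).
    by move=> t; apply: pts_flip; rewrite -HR.
  have Hre : forall e a b, e \in EC -> (a, b) \in pieces (cut e) (len e) ->
      rho_edge src inv len EC w0 w1 (e, a, b) =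
      let ra := Phi src inv len f e a in let rb := Phi src inv len f e b in
      if ra == rb then None else if ra < rb then Some (inr true, ra, rb)
      else Some (inr false, f w1 - ra, f w1 - rb).
    move=> e a b eC mem; have [E1 E2] := Hrho e a b eC mem.
    by rewrite /rho_edge eC E1 E2 HR.
  have Hmor' : forall e a b, e \in EC -> (a, b) \in pieces (cut e) (len e) ->
      match rho_edge src inv len EC w0 w1 (e, a, b) with
      | Some q => q \in sub_edges' src inv len EC w0 w1 cut'
      | None => Phi src inv len f e a \in pts (cut' (inr true)) (f w1)
      end.
    move=> e a b eC mem; have := Hmor (e, a, b); rewrite mem_sub_edges => /(_ mem).
    case: (rho_edge _ _ _ _ _ _ _) => // Hn.
    have [E1 _] := Hrho e a b eC mem.
    by move: Hn; rewrite /= E1 HR mem_pts.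
  have M3' : forall e a b, e \in EC -> (a, b) \in pieces (cut e) (len e) ->
      Phi src inv len f e a \in pts (cut' (inr true)) (f w1) /\
      Phi src inv len f e b \in pts (cut' (inr true)) (f w1).
    move=> e a b eC mem; have := Hmor' e a b eC mem; rewrite Hre //=.
    case: eqP => [Eab|_]; first by rewrite -Eab => Hx; split.
    case: ifP => _ /mem_sub_edges' [_] /= /pieces_mem [H1 H2].
      by rewrite -HR; split.
    by rewrite HR in H1 H2; rewrite !Hflip; split.
  pose F : V -> rat := if bb then f else (fun v => f w1 - f v).
  have PhiF : forall e t, Phi src inv len F e t =
      if bb then Phi src inv len f e t else f w1 - Phi src inv len f e t.
    by move=> e t; rewrite /F; case: (bb) => //; rewrite Phi_neg.
  have HF : forall u, lapl (Cedges src inv len EC) F u =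
      ddiff (if bb then w1 else w0) (if bb then w0 else w1) u.
    move=> u; rewrite /F; case: (bb) => //.
    by rewrite lapl_neg Hf /ddiff opprB.
  have M3 : forall e z, e \in EC -> z \in pts (cut e) (len e) ->
      Phi src inv len F e z \in pts (cut' (inr bb)) (f w1).
    move=> e z eC zm; have [a [b [mem Ez]]] := pts_endpoint (Hp e) (Hcutv e) zm.
    have [Ha Hb] := M3' e a b eC mem.
    have Hz : Phi src inv len f e z \in pts (cut' (inr true)) (f w1) by case: Ez => ->.
    rewrite PhiF; case: (bb) => //; by rewrite -Hflip.
  have M2 : forall e a b, e \in EC -> (a, b) \in pieces (cut e) (len e) ->
      Phi src inv len F e a < Phi src inv len F e b ->
      (Phi src inv len F e a, Phi src inv len F e b) \in pieces (cut' (inr bb)) (f w1).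
    move=> e a b eC mem; have := Hmor' e a b eC mem; rewrite Hre // !PhiF /=.
    case: (bb) => Hm lt.
      by move: Hm; rewrite (lt_eqF lt) lt => /mem_sub_edges' [_]; rewrite /= HR.
    have lt' : Phi src inv len f e b < Phi src inv len f e a by move: lt; rewrite ltrD2l ltrN2.
    by move: Hm; rewrite (gt_eqF lt') ltNge (ltW lt') /= => /mem_sub_edges' [_]; rewrite /= HR.
  have M1 : forall p, p \in sub_edges len cut ->
      (rho_edge src inv len EC w0 w1 p == Some (inr bb, a', b')) =
      (p.1.1 \in EC) && (Phi src inv len F p.1.1 p.1.2 == a') && (Phi src inv len F p.1.1 p.2 == b').
    move=> [[e a] b]; rewrite mem_sub_edges => mem.
    have [eC|eNC] : (e \in EC) \/ (e \notin EC) by case: (e \in EC); [left|right].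
    2: by rewrite /rho_edge /= (negbTE eNC).
    rewrite Hre // /= !PhiF eC /=.
    set ra := Phi src inv len f e a; set rb := Phi src inv len f e b.
    case: (bb); case: (ltgtP ra rb) => Hr /=.
    - by apply/eqP/andP => [[-> ->]|[/eqP -> /eqP ->]].
    - apply/esym/negbTE/negP => /andP [/eqP E1 /eqP E2].
      by move: ab; rewrite -E1 -E2 ltNge (ltW Hr).
    - apply/esym/negbTE/negP => /andP [/eqP E1 /eqP E2].
      by move: ab; rewrite -E1 -E2 Hr ltxx.
    - apply/esym/negbTE/negP => /andP [/eqP E1 /eqP E2].
      have : f w1 - rb < f w1 - ra by rewrite ltrD2l ltrN2.
      by rewrite E1 E2 ltNge (ltW ab).
    - by apply/eqP/andP => [[-> ->]|[/eqP -> /eqP ->]].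
    - apply/esym/negbTE/negP => /andP [/eqP E1 /eqP E2].
      by move: ab; rewrite -E1 -E2 Hr ltxx.
  transitivity (\sum_(p <- sub_edges len cut | (p.1.1 \in EC) && (Phi src inv len F p.1.1 p.1.2 == a')
        && (Phi src inv len F p.1.1 p.2 == b')) 1 / plen p); last first.
    rewrite [LHS]big_seq_cond [RHS]big_seq_cond; apply: eq_bigl => p.
    by case pm: (p \in sub_edges len cut) => //=; rewrite M1.
  rewrite (core_sum (F := F) (x0 := if bb then w0 else w1) (x1 := if bb then w1 else w0)) //.
  - by rewrite /F; case: (bb) => /=; rewrite ?Hf0 ?subrr.
  - by rewrite /F; case: (bb) => /=; rewrite ?Hf0 ?subr0.
  - by move=> e z eC zm; apply: (pieces_gap mem'); apply: M3.
  - move=> e a b eC mem lt h1 h2; have P := M2 e a b eC mem lt.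
    have g1 := pieces_gap P ma'; have g2 := pieces_gap P mb'.
    case/orP: g1 => g1; case/orP: g2 => g2; split; lra.
Qed.
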